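(* Let $G=\mathrm{Sp}(2r)$ with $r\geqslant1$, let $\lambda\in\Lambda^+$, $\lambda\neq0$, let $q=\max\{i\leqslant r:\alpha_i\in\operatorname{Supp}(\lambda)\}$ and set $\lambda^{\mathrm{lb}}_G=\lambda-\sum_{i=q}^{r-1}\alpha_i-\tfrac12\alpha_r=\lambda+\omega_{q-1}-\omega_q$ (with $\omega_0=0$). Then $\mathrm{LB}_G(\lambda)=\{\lambda^{\mathrm{lb}}_G\}$, i.e. $\lambda^{\mathrm{lb}}_G$ is the unique little brother of $\lambda$ with respect to $G$.
   Context: $G=\mathrm{Sp}(2r)$ over an algebraically closed field of characteristic zero (simply connected, so $\mathcal{X}(T)=\Lambda$ is the weight lattice), $T\subset B$ a maximal torus and Borel subgroup, $\Phi^+$ the positive roots, simple roots $\alpha_1,\dots,\alpha_r$ numbered as in Bourbaki (type $\mathsf{C}_r$, $\alpha_r$ long; $\mathsf{C}_2=\mathsf{B}_2$, $\mathsf{C}_1=\mathsf{A}_1$), $\omega_i$ the fundamental weights, $\Lambda^+$ the dominant weights. $\Pi^+(\lambda)=\{\mu\in\Lambda^+:\lambda-\mu\in\mathbb{N}[\Delta]\}$, $\Pi_G^+(\lambda)=\{\mu\in\Lambda^+:\lambda-\mu\in\mathbb{Q}_{\geq0}[\Delta]\}$; $\operatorname{Supp}(\lambda)=\{\alpha\in\Delta:\langle\lambda,\alpha^\vee\rangle\neq0\}$; $\Phi^+(\lambda)$ is the set of positive roots whose expression in simple roots involves some element of $\operatorname{Supp}(\lambda)$; $\nu\leqslant^\lambda_\mathbb{Q}\mu$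 iff $\mu-\nu\in\mathbb{Q}_{\geq0}[\Phi^+(\lambda)]$. Adjoint little brother: if $r\geqslant2$, $\alpha_{r-1}\notin\operatorname{Supp}(\lambda)$... more precisely, for the non-simply-laced diagram numbered from the extremal long root $\alpha_r$ (so that the first short root is $\alpha_{r-1}$), if $\alpha_{r-1}\notin\operatorname{Supp}(\lambda)$ and $\alpha_r\in\operatorname{Supp}(\lambda)$ then $\mathrm{LB}(\lambda)=\{\lambda-\alpha_{r-1}-\alpha_r\}$, and otherwise $\mathrm{LB}(\lambda)=\varnothing$ (also for $r=1$). $\mathrm{LB}_G(\lambda)$ is the set of elements of $(\Pi_G^+(\lambda)\smallsetminus\Pi^+(\lambda))\cup\mathrm{LB}(\lambda)$ maximal in this set w.r.t. $\leqslant^\lambda_\mathbb{Q}$. *)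

(* Defs.v *)
(* Type C_r root datum for G = Sp(2r), in epsilon-coordinates:
   weights are row vectors 'rV[rat]_r; the weight lattice Lambda = Z^r
   (G simply connected), simple roots (Bourbaki, 1-based indices)
   alpha_i = eps_i - eps_{i+1} (1 <= i < r), alpha_r = 2 eps_r. *)
From HB Require Import structures.
From mathcomp Require Import all_boot all_order all_algebra.
Set Implicit Arguments. Unset Strict Implicit. Unset Printing Implicit Defensive.
Import Order.TTheory GRing.Theory Num.Theory.
Local Open Scope ring_scope.

Section Cr.
Variable r : nat.

Definition vec := 'rV[rat]_r.

Definition eps (i : 'I_r) : vec := \row_j (j == i)%:R.

(* simple root alpha_i, 1-based index i, 1 <= i <= r (zero otherwise) *)
Definition alpha (i : nat) : vec :=
  \row_(j < r) (if (i < r)%N then ((j.+1 == i)%:R - (j.+1 == i.+1)%:R)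
               else if i == r then 2 * (j.+1 == r)%:R else 0).

Definition omega (i : nat) : vec := \row_(j < r) (j.+1 <= i)%N%:R.

Definition dot (u v : vec) : rat := \sum_(j < r) u 0 j * v 0 j.

Definition pairing (l : vec) (i : nat) : rat :=
  2 * dot l (alpha i) / dot (alpha i) (alpha i).

Definition in_lattice (l : vec) : Prop := forall j, l 0 j \is a Num.int.

Definition Supp (l : vec) (i : nat) : Prop :=
  (1 <= i <= r)%N /\ pairing l i != 0.

Definition dominant (l : vec) : Prop :=
  in_lattice l /\ forall i, (1 <= i <= r)%N -> 0 <= pairing l i.

Definition in_N_Delta (v : vec) : Prop :=
  exists c : nat -> nat, v = \sum_(1 <= i < r.+1) (c i)%:R *: alpha i.
Definition in_Q_Delta (v : vec) : Prop :=
  exists c : nat -> rat, (forall i, 0 <= c i) /\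
    v = \sum_(1 <= i < r.+1) c i *: alpha i.

Definition Pi_plus (l m : vec) : Prop := dominant m /\ in_N_Delta (l - m).
Definition Pi_plus_G (l m : vec) : Prop := dominant m /\ in_Q_Delta (l - m).

Definition sgn (b : bool) : rat := (-1) ^+ b.
Definition is_root (b : vec) : Prop :=
  exists (i j : 'I_r) (s t : bool),
    (i != j /\ b = sgn s *: eps i + sgn t *: eps j) \/ b = sgn s *: (2 *: eps i).
Definition is_pos_root (b : vec) : Prop := is_root b /\ in_N_Delta b.

Definition Phi_plus_l (l b : vec) : Prop :=
  is_pos_root b /\
  exists c : nat -> nat, b = \sum_(1 <= i < r.+1) (c i)%:R *: alpha i /\
    exists k, Supp l k /\ c k <> 0%N.

Definition leQ (l nu mu : vec) : Prop :=
  exists s : seq (rat * vec),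
    (forall p, p \in s -> 0 <= p.1 /\ Phi_plus_l l p.2) /\
    mu - nu = \sum_(p <- s) p.1 *: p.2.

(* adjoint little brother LB(lambda) (1-based: alpha_{r-1} short, alpha_r long) *)
Definition LB (l m : vec) : Prop :=
  (2 <= r)%N /\ ~ Supp l r.-1 /\ Supp l r /\ m = l - alpha r.-1 - alpha r.

Definition LB_candidate (l m : vec) : Prop :=
  (Pi_plus_G l m /\ ~ Pi_plus l m) \/ LB l m.

Definition LB_G (l m : vec) : Prop :=
  LB_candidate l m /\
  forall nu, LB_candidate l nu -> leQ l m nu -> nu = m.

End Cr.

(* Main.v *)
Require Import Defs.
From HB Require Import structures.
From mathcomp Require Import all_boot all_order all_algebra.
From mathcomp Require Import zify ring lra.
Import Order.TTheory GRing.Theory Num.Theory.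
Local Open Scope ring_scope.
Set Implicit Arguments. Unset Strict Implicit. Unset Printing Implicit Defensive.

Lemma IS (a b n : nat) (c : nat -> rat) :
  \sum_(a <= i < b) c i * (n == i)%:R = if (a <= n < b)%N then c n else 0.
Proof.
elim: b => [|b IH]; first by rewrite big_geq //; case: ifP => //; lia.
case: (leqP a b) => hab.
  rewrite big_nat_recr //= IH; case: (eqVneq n b) => [->|hn].
    rewrite mulr1; case: ifP; first lia. move=> _; rewrite add0r; case: ifP => //; lia.
  rewrite mulr0 addr0; case: ifP => h1; case: ifP => h2 //; lia.
rewrite big_geq; last lia. case: ifP => //; lia.
Qed.
Section Aux.
Variable r : nat.
Local Notation vec := (vec r).
Local Notation alpha := (alpha r).

Lemma sum_ord_ind (F : 'I_r -> rat) (i : 'I_r) :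
  \sum_(j < r) F j * (j == i)%:R = F i.
Proof.
rewrite (bigD1 i) //= eqxx mulr1 big1 ?addr0 // => j /negbTE ->; by rewrite mulr0.
Qed.

Definition C (c : nat -> rat) (m : nat) : rat :=
  if m == 0%N then 0 else if (m < r)%N then c m else 2 * c r.

Lemma L0 (c : nat -> rat) (j : 'I_r) :
  (\sum_(1 <= i < r.+1) c i *: alpha i) 0 j = C c j.+1 - C c j.
Proof.
have hj := ltn_ord j.
rewrite summxE big_nat_recr /=; last lia.
rewrite (eq_big_nat _ _ (F2 := fun i => c i * (j.+1 == i)%:R - c i * ((j : nat) == i)%:R)); last first.
  move=> i hi; rewrite !mxE; have -> : (i < r)%N by lia.
  by rewrite mulrBr eqSS.
rewrite sumrB !IS !mxE ltnn eqxx /C.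
rewrite hj /= andbT.
case: ifP => h1; case: ifP => h2; case: (eqVneq j.+1 r) => h3; case: (eqVneq (j:nat) 0%N) => h4;
  rewrite ?mulr0 ?mulr1 ?addr0 ?subr0 ?sub0r; try lia; ring.
Qed.
End Aux.
Section Aux2.
Variable r : nat.
Local Notation vec := (vec r).
Local Notation alpha := (alpha r).
Local Notation C := (C r).

Definition P (k : nat) (x : vec) : rat := \sum_(j < r) (j < k)%:R * x 0 j.

Lemma PD k x y : P k (x + y) = P k x + P k y.
Proof. by rewrite /P -big_split; apply: eq_bigr => j _; rewrite !mxE mulrDr. Qed.
Lemma PZ k a x : P k (a *: x) = a * P k x.
Proof. by rewrite /P mulr_sumr; apply: eq_bigr => j _; rewrite !mxE mulrCA. Qed.
Lemma PN k x : P k (- x) = - P k x.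
Proof. by rewrite /P -sumrN; apply: eq_bigr => j _; rewrite !mxE mulrN. Qed.
Lemma PB k x y : P k (x - y) = P k x - P k y.
Proof. by rewrite PD PN. Qed.
Lemma P0v k : P k 0 = 0.
Proof. by rewrite /P big1 // => j _; rewrite mxE mulr0. Qed.
Lemma Pk0 x : P 0 x = 0.
Proof. by rewrite /P big1 // => j _; rewrite mul0r. Qed.
Lemma Pseq k (s : seq (rat * vec)) : P k (\sum_(p <- s) p.1 *: p.2) = \sum_(p <- s) p.1 * P k p.2.
Proof. elim: s => [|p s IH]; first by rewrite !big_nil P0v. by rewrite !big_cons PD PZ IH. Qed.

Lemma Psucc k x (hk : (k < r)%N) : P k.+1 x = P k x + x 0 (Ordinal hk).
Proof.
rewrite /P -(sum_ord_ind (fun j => x 0 j) (Ordinal hk)) -big_split; apply: eq_bigr => j _ /=.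
rewrite [x 0 j * _]mulrC -mulrDl -natrD; congr (_%:R * _).
have -> : (j == Ordinal hk) = (nat_of_ord j == k) by [].
case: (ltngtP j k) => h; lia.
Qed.

Lemma xP (x : vec) (j : 'I_r) : x 0 j = P j.+1 x - P j x.
Proof. by rewrite (Psucc _ (ltn_ord j)) addrC addKr; congr (x 0 _); apply: val_inj. Qed.

Lemma PC (c : nat -> rat) k : (k <= r)%N -> P k (\sum_(1 <= i < r.+1) c i *: alpha i) = C c k.
Proof.
elim: k => [|k IH] hk; first by rewrite Pk0 /C.
rewrite (Psucc _ hk) IH ?L0 /=; [ring|lia].
Qed.

Lemma Peps k (i : 'I_r) : P k (eps i) = (i < k)%:R.
Proof.
rewrite /P (eq_bigr (fun j : 'I_r => (j < k)%:R * (j == i)%:R)); first by rewrite sum_ord_ind.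
by move=> j _; rewrite mxE.
Qed.

Definition cx (x : vec) (i : nat) : rat := if (i < r)%N then P i x else P r x / 2.

Lemma Ccx (x : vec) m : (m <= r)%N -> C (cx x) m = P m x.
Proof.
move=> hm; rewrite /C /cx; case: eqVneq => [->|h]; first by rewrite Pk0.
case: ifP => h1; first by rewrite h1.
rewrite ltnn (_ : m = r); last lia.
by rewrite mulrC divfK.
Qed.

Lemma L1 (x : vec) : x = \sum_(1 <= i < r.+1) cx x i *: alpha i.
Proof.
apply/rowP => j; rewrite L0 xP !Ccx //; have := ltn_ord j; lia.
Qed.

End Aux2.
Section GoodS.
Variable r : nat.
Variable l : vec r.
Local Notation vec := (vec r).
Local Notation alpha := (alpha r).
Local Notation C := (C r).
Local Notation P := (@P r).

Definition Good (x : vec) := exists s : seq (rat * vec),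
  (forall p, p \in s -> 0 <= p.1 /\ Phi_plus_l l p.2) /\ x = \sum_(p <- s) p.1 *: p.2.

Lemma Good0 : Good 0.
Proof. by exists [::]; split => //; rewrite big_nil. Qed.

Lemma GoodD x y : Good x -> Good y -> Good (x + y).
Proof.
move=> [s1 [h1 ->]] [s2 [h2 ->]]; exists (s1 ++ s2); split; last by rewrite big_cat.
by move=> p; rewrite mem_cat => /orP [/h1|/h2].
Qed.

Lemma GoodZ a b : 0 <= a -> Phi_plus_l l b -> Good (a *: b).
Proof.
move=> ha hb; exists [:: (a, b)]; split; last by rewrite big_seq1.
by move=> p; rewrite inE => /eqP -> .
Qed.

Lemma Good_sum (F : 'I_r -> vec) : (forall j, Good (F j)) -> Good (\sum_j F j).
Proof.
move=> h; elim/big_ind: _ => //; [exact: Good0 | exact: GoodD].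
Qed.

Lemma NDelta_P (b : vec) k : in_N_Delta b -> (k <= r)%N -> 0 <= P k b.
Proof.
move=> [c ->] hk; rewrite PC // /C.
case: ifP => // _; case: ifP => _ //; rewrite ?mulr_ge0 ?ler0n //.
Qed.

Lemma Good_P x k : Good x -> (k <= r)%N -> 0 <= P k x.
Proof.
move=> [s [hs ->]] hk; rewrite Pseq big_seq; apply: sumr_ge0 => p /hs [h1 [[_ h2] _]].
by rewrite mulr_ge0 // NDelta_P.
Qed.

Lemma Good_pointed x : Good x -> Good (- x) -> x = 0.
Proof.
move=> h1 h2; apply/rowP => j; rewrite xP mxE.
have hj := ltn_ord j.
have a1 := Good_P h1 hj; have a2 := Good_P h2 hj.
have a3 := Good_P h1 (ltnW hj); have a4 := Good_P h2 (ltnW hj).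
rewrite !PN in a2 a4.
have e1 : P j.+1 x = 0 by lra.
have e2 : P j x = 0 by lra.
by rewrite e1 e2 subrr.
Qed.
End GoodS.
Lemma natB4 (a b c d : nat) : (a + d = c + b)%N -> (a%:R - b%:R = c%:R - d%:R :> rat).
Proof. move=> h; have h' : (a + d)%:R = (c + b)%:R :> rat by rewrite h. rewrite !natrD in h'; lra. Qed.

Section Roots.
Variable r : nat.
Variable l : vec r.
Local Notation vec := (vec r).
Local Notation alpha := (alpha r).
Local Notation C := (C r).
Local Notation P := (@P r).

Lemma sgnF : sgn false = 1. Proof. by rewrite /sgn expr0. Qed.
Lemma sgnT : sgn true = -1. Proof. by rewrite /sgn expr1. Qed.

Lemma root1 (i j : 'I_r) k : (i < j)%N -> (i < k <= j)%N -> Supp l k -> Phi_plus_l l (eps i - eps j).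
Proof.
move=> hij hk hs.
pose c := fun k' : nat => nat_of_bool ((i < k') && (k' <= j))%N.
have hC : forall m, (m <= r)%N -> C (fun k' => (c k')%:R) m = (c m)%:R.
  move=> m hm; rewrite /C /c; case: eqVneq => [->|h0] //.
  case: ifP => // h1; have hj := ltn_ord j.
  rewrite (_ : m = r); last lia. rewrite (_ : (r <= j)%N = false) ?andbF ?mulr0 //; lia.
have hexp : eps i - eps j = \sum_(1 <= k' < r.+1) (c k')%:R *: alpha k'.
  apply/rowP => k0; have hk0 := ltn_ord k0.
  rewrite L0 !hC //; last lia.
  rewrite !mxE; apply: natB4; rewrite /c.
rewrite (_ : (k0 == i) = (nat_of_ord k0 == i)) // (_ : (k0 == j) = (nat_of_ord k0 == j)) //; lia.
split; [split|].
- exists i, j, false, true; left; split; first by rewrite neq_ltn hij.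
  by rewrite sgnF sgnT scale1r scaleN1r.
- by exists c.
- exists c; split; first exact: hexp. by exists k; split => //; rewrite /c hk.
Qed.

Lemma root2 (j : 'I_r) q : (j < q)%N -> Supp l q -> Phi_plus_l l (2 *: eps j).
Proof.
move=> hjq hs; have hqr : (q <= r)%N by case: hs => /andP [].
pose c := fun k' : nat => if (k' < r)%N then (2 * (j < k'))%N else 1%N.
have hC : forall m, (m <= r)%N -> C (fun k' => (c k')%:R) m = (2 * (j < m))%N%:R.
  move=> m hm; rewrite /C; case: eqVneq => [->|h0] //.
  have hj := ltn_ord j.
  case: ifP => h1; first by rewrite /c h1.
  rewrite /c ltnn (_ : m = r); last lia. by rewrite (_ : (j < r)%N = true) // natrM.
have hexp : 2 *: eps j = \sum_(1 <= k' < r.+1) (c k')%:R *: alpha k'.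
  apply/rowP => k0; have hk0 := ltn_ord k0.
  rewrite L0 !hC //; last lia.
  rewrite !mxE (_ : (k0 == j) = (nat_of_ord k0 == j)) //.
  have e : (2 * (j < k0.+1))%N = (2 * (nat_of_ord k0 == j) + 2 * (j < k0))%N by lia.
  rewrite e natrD !natrM; lra.
split; [split|].
- by exists j, j, false, false; right; rewrite sgnF scale1r.
- by exists c.
- exists c; split; first exact: hexp. exists q; split => //; rewrite /c; case: ifP => //; lia.
Qed.
End Roots.
Section Pos.
Variable r : nat.
Variable l : vec r.
Local Notation vec := (vec r).

Lemma GoodPos (y : vec) q : Supp l q -> (forall j, 0 <= y 0 j) ->
  (forall j : 'I_r, (q <= j)%N -> y 0 j = 0) -> Good l y.
Proof.
move=> hs hy0 hyq.
have -> : y = \sum_(j < r) (y 0 j / 2) *: (2 *: eps j).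
  apply/rowP => k; rewrite summxE.
  rewrite (eq_bigr (fun j => y 0 j * (j == k)%:R)); first by rewrite sum_ord_ind.
  move=> j _; by rewrite !mxE eq_sym; field.

apply: (@Good_sum r l (fun j => (y 0 j / 2) *: (2 *: eps j))) => j; case: (ltnP j q) => h.
  apply: GoodZ; first by rewrite divr_ge0.
  exact: root2 h hs.
by rewrite hyq // mul0r scale0r; exact: Good0.
Qed.
End Pos.
Section Transport.
Variable r : nat.
Variable l : vec r.
Local Notation vec := (vec r).
Local Notation P := (@P r).

Definition suppb (k : nat) := ((1 <= k <= r)%N && (pairing l k != 0)).
Lemma suppP k : Supp l k <-> suppb k.
Proof. by rewrite /Supp /suppb; split => [[-> ->] | /andP []]. Qed.

Definition H1 (x : vec) := forall k, (k <= r)%N -> 0 <= P k x.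
Definition H2 (x : vec) := forall i j : 'I_r, (i < j)%N -> x 0 j < 0 ->
  (forall k, (i < k <= j)%N -> ~ Supp l k) -> x 0 i <= 0.

Lemma TL_nonneg (x : vec) : ~~ [exists j, x 0 j < 0] ->
  exists y, Good l (x - y) /\ (forall j, 0 <= y 0 j) /\ (forall j, x 0 j <= 0 -> y 0 j <= 0).
Proof.
move/existsPn => h; exists x; split; first by rewrite subrr; exact: Good0.
by split => // j; have := h j; rewrite -leNgt.
Qed.

Lemma move_entry (x : vec) (i j : 'I_r) t (m : 'I_r) : i != j ->
  (x - t *: (eps i - eps j)) 0 m =
  if m == i then x 0 i - t else if m == j then x 0 j + t else x 0 m.
Proof.
move=> hij; rewrite !mxE; case: (eqVneq m i) => [->|hmi].
  by rewrite (negbTE hij) subr0 mulr1.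
case: (eqVneq m j) => [->|hmj] /=; first by rewrite sub0r mulrN1 opprK.
by rewrite subrr mulr0 subr0.
Qed.

Lemma TL n : forall x : vec, (#|[pred j | (x 0 j != 0)%R]| <= n)%N -> H1 x -> H2 x ->
  exists y, Good l (x - y) /\ (forall j, 0 <= y 0 j) /\ (forall j, x 0 j <= 0 -> y 0 j <= 0).
Proof.
elim: n => [|n IH] x hn h1 h2; case: (boolP [exists j, x 0 j < 0]) => hneg;
  try exact: TL_nonneg.
  exfalso; case/existsP: hneg => j hj.
  move: hn; rewrite leqn0 => /eqP/card0_eq/(_ j); rewrite inE => /negbFE/eqP hj0.
  by rewrite hj0 ltxx in hj.
case/existsP: hneg => j0 hj0.
case: (@arg_minnP _ j0 (fun j => x 0 j < 0) (fun j : 'I_r => nat_of_ord j) hj0) => j hjx hmin.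
have hbefore : forall i : 'I_r, (i < j)%N -> 0 <= x 0 i.
  move=> i hi; rewrite leNgt; apply/negP => /hmin; by rewrite leqNgt hi.
have hPj : - x 0 j <= P j x.
  have := h1 j.+1 (ltn_ord j); rewrite (xP x j); lra.
case: (boolP [exists i : 'I_r, (i < j)%N && (0 < x 0 i)]) => hex; last first.
  exfalso; move/existsPn: hex => hex.
  have : P j x <= 0.
    rewrite /P; apply: sumr_le0 => i _; case: (ltnP i j) => hij /=.
      have := hex i; rewrite hij /= -leNgt => hi; by rewrite mul1r.
    by rewrite mul0r.
  lra.
case/existsP: hex => i00 hi00.
case: (@arg_maxnP _ i00 (fun i => (i < j)%N && (0 < x 0 i)) (fun i : 'I_r => nat_of_ord i) hi00)
  => i /andP [hij hxi] hmax.
have hzero : forall m : 'I_r, (i < m < j)%N -> x 0 m = 0.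
  move=> m /andP [h1m h2m]; have := hbefore m h2m; rewrite le0r => /orP [/eqP //|hm].
  have := hmax m; rewrite h2m hm /= => /(_ isT) h; by rewrite leqNgt h1m in h.
have hPk : forall k, (i < k <= j)%N -> P k x = P j x.
  move=> k hk; apply/eqP; rewrite eq_sym -subr_eq0; apply/eqP.
  rewrite /P -sumrB big1 // => m _; rewrite -mulrBl.
  case: (ltnP m k) => hmk.
    rewrite (_ : (m < j)%N = true) ?subrr ?mul0r //; clear -hmk hk; lia.
  case: (ltnP m j) => hmj; last by rewrite subrr mul0r.
  by rewrite hzero ?mulr0 //; clear -hmk hmj hk; lia.
have hcut : exists k, (i < k <= j)%N /\ Supp l k.
  case: (boolP [exists k : 'I_r.+1, (i < k <= j)%N && suppb k]).
    by case/existsP => k /andP [hk /suppP hs]; exists k.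
  move/existsPn => hn'; exfalso.
  suff : x 0 i <= 0 by lra.
  apply: (h2 i j hij hjx) => k hk /suppP hs.
  have hkr : (k < r.+1)%N by have := ltn_ord j; clear -hk; lia.
  by have := hn' (Ordinal hkr); rewrite /= hk hs.
have hneq : i != j by rewrite neq_ltn hij.
pose t := if x 0 i <= - x 0 j then x 0 i else - x 0 j.
have ht0 : 0 < t by rewrite /t; case: ifP => _; lra.
have ht1 : t <= x 0 i by rewrite /t; case: ifP => h; lra.
have ht2 : t <= - x 0 j by rewrite /t; case: ifP => h; lra.
pose x' := x - t *: (eps i - eps j).
have hx' : forall m : 'I_r, x' 0 m = (if m == i then x 0 i - t else if m == j then x 0 j + t else x 0 m) by move=> m; exact: move_entry.
have hsub : forall m, x' 0 m != 0 -> x 0 m != 0.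
  move=> m; rewrite hx'; case: (eqVneq m i) => [->|_]; first by move=> _; lra.
  case: (eqVneq m j) => [->|_] //; move=> _; lra.
have hcard : (#|[pred m | (x' 0 m != 0)%R]| < #|[pred m | (x 0 m != 0)%R]|)%N.
  apply: proper_card; apply/properP; split.
    by apply/subsetP => m; rewrite !inE; apply: hsub.
  case: (lerP (x 0 i) (- x 0 j)) => hc.
    exists i; rewrite !inE; first lra.
    by rewrite hx' eqxx /t hc subrr eqxx.
  exists j; rewrite !inE; first lra.
  have hji : (j == i) = false by rewrite eq_sym (negbTE hneq).
  by rewrite hx' hji eqxx /t leNgt hc /= addrN eqxx.
have h1' : H1 x'.
  move=> k hk; rewrite /x' PB PZ PB !Peps.
  have := h1 k hk; case: (ltnP i k) => hik; case: (ltnP j k) => hjk; try (exfalso; clear -hij hik hjk; lia).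
  - by rewrite subrr mulr0 subr0.
  - rewrite subr0 mulr1 hPk; [lra|clear -hik hjk; lia].
  - by rewrite subrr mulr0 subr0.
have h2' : H2 x'.
  move=> a b hab; rewrite !hx' => hb hnocut.
  have hxb : x 0 b < 0.
    move: hb; case: (eqVneq b i) => [->|_]; first by lra.
    case: (eqVneq b j) => [->|_] //; lra.
  have := h2 a b hab hxb hnocut.
  case: (eqVneq a i) => [->|_]; first by lra.
  case: (eqVneq a j) => [->|_] //; lra.
have [y [hy1 [hy2 hy3]]] := IH x' (leq_trans hcard hn) h1' h2'.
exists y; split; last split => //.
  have -> : x - y = (x' - y) + t *: (eps i - eps j) by rewrite /x' addrAC subrK.
  apply: GoodD => //; apply: GoodZ; first lra.
  by case: hcut => k [hk hs]; exact: root1 hij hk hs.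
move=> m hm; apply: hy3; rewrite hx'.
case: ifP => [/eqP e|_]; first by rewrite -e in hxi; lra.
case: ifP => [/eqP e|_]; last by [].
rewrite e in hm; lra.
Qed.
End Transport.
Section Pair.
Variable r : nat.
Local Notation vec := (vec r).
Local Notation alpha := (alpha r).

Definition xn (x : vec) (n : nat) : rat := \sum_(j < r) ((j : nat) == n)%:R * x 0 j.

Lemma xnE (x : vec) (j : 'I_r) : xn x j = x 0 j.
Proof. by rewrite /xn (eq_bigr (fun k => x 0 k * (k == j)%:R)) ?sum_ord_ind // => k _; rewrite mulrC. Qed.

Lemma xnO (x : vec) n : (r <= n)%N -> xn x n = 0.
Proof. move=> h; rewrite /xn big1 // => j _; rewrite (_ : (j : nat) == n = false) ?mul0r //; have := ltn_ord j; lia. Qed.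

Lemma xnB (x y : vec) n : xn (x - y) n = xn x n - xn y n.
Proof. by rewrite /xn -sumrB; apply: eq_bigr => j _; rewrite !mxE mulrBr. Qed.

Lemma xn_lt (x : vec) n (h : (n < r)%N) : xn x n = x 0 (Ordinal h).
Proof. by rewrite -xnE. Qed.

Lemma dot_alpha (x : vec) i : (1 <= i < r)%N -> dot x (alpha i) = xn x i.-1 - xn x i.
Proof.
move=> /andP [h1 h2]; rewrite /dot /xn -sumrB; apply: eq_bigr => j _.
rewrite mxE h2 -{1 2}(prednK h1) !eqSS mulrBr.
by rewrite (prednK h1) !(mulrC (x 0 j)).
Qed.

Lemma dot_alphar (x : vec) : (1 <= r)%N -> dot x (alpha r) = 2 * xn x r.-1.
Proof.
move=> h1; rewrite /dot /xn mulr_sumr; apply: eq_bigr => j _.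
rewrite mxE ltnn eqxx (_ : (j.+1 == r) = ((j : nat) == r.-1)); [ring | lia].
Qed.

Lemma pairing_lt (x : vec) i : (1 <= i < r)%N -> pairing x i = xn x i.-1 - xn x i.
Proof.
move=> h; rewrite /pairing !dot_alpha //.
have h1 : (i.-1 < r)%N by lia.
have h2 : (i < r)%N by lia.
rewrite (xn_lt (alpha i) h1) (xn_lt (alpha i) h2) !mxE /=.
have -> : (i < r)%N by lia.
rewrite (_ : (i.-1.+1 == i) = true); last lia.
rewrite (_ : (i.-1.+1 == i.+1) = false); last lia.
rewrite (_ : (i.+1 == i) = false); last lia.
rewrite (_ : (i.+1 == i.+1) = true); last lia.
rewrite /= subr0 sub0r opprK (_ : 1 + 1 = 2 :> rat) // [2 * _]mulrC mulfK //.
Qed.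

Lemma pairing_r (x : vec) : (1 <= r)%N -> pairing x r = xn x r.-1.
Proof.
move=> h; rewrite /pairing !dot_alphar //.
have h1 : (r.-1 < r)%N by lia.
rewrite (xn_lt (alpha r) h1) !mxE /= ltnn eqxx (prednK h) eqxx.
rewrite /= mulr1; by field.
Qed.
End Pair.
Lemma int_ge1 (x : rat) : x \is a Num.int -> 0 < x -> 1 <= x.
Proof. move=> /intrP [m ->]. rewrite ltr0z ler1z. lia. Qed.

Lemma desc (r a : nat) (Pn : nat -> Prop) : Pn r.-1 ->
  (forall n, (a <= n)%N -> (n.+1 < r)%N -> Pn n.+1 -> Pn n) ->
  forall n, (a <= n < r)%N -> Pn n.
Proof.
move=> h0 hs.
have : forall k n, (n + k = r.-1)%N -> (a <= n < r)%N -> Pn n.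
  elim => [|k IH] n hnk h; first by rewrite (_ : n = r.-1) //; lia.
  apply: hs; [lia|lia|]; apply: IH; lia.
move=> H n hn; apply: (H (r.-1 - n)%N); lia.
Qed.

Section Main.
Variables (r : nat) (l : vec r) (q : nat).
Hypothesis hr : (1 <= r)%N.
Hypothesis hdom : dominant l.
Hypothesis hsq : Supp l q.
Hypothesis hq : forall i, (q < i <= r)%N -> ~ Supp l i.
Local Notation vec := (vec r).
Local Notation alpha := (alpha r).
Local Notation P := (@P r).
Local Notation C := (C r).

Lemma hqr : (1 <= q <= r)%N. Proof. by case: hsq. Qed.
Lemma hq1' : (q.-1 < r)%N. Proof. have := hqr; lia. Qed.
Definition qo : 'I_r := Ordinal hq1'.
Definition e : vec := eps qo.

Lemma eE (j : 'I_r) : e 0 j = ((j : nat) == q.-1)%:R.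
Proof. by rewrite mxE. Qed.

Lemma xn_int (x : vec) n : in_lattice x -> xn x n \is a Num.int.
Proof.
move=> hx; case: (ltnP n r) => h; first by rewrite (xn_lt _ h).
by rewrite xnO.
Qed.

Lemma dom_mono (x : vec) n : dominant x -> (n.+1 < r)%N -> xn x n.+1 <= xn x n.
Proof.
move=> [_ hx] h; have := hx n.+1; rewrite pairing_lt /=; last lia.
move=> /(_ (ltnW h)); lra.
Qed.

Lemma dom_nonneg (x : vec) n : dominant x -> 0 <= xn x n.
Proof.
move=> hx; case: (ltnP n r) => h; last by rewrite xnO.
apply: (@desc r 0 (fun n => 0 <= xn x n) _ _ n); last lia.
  by case: hx => _ /(_ r); rewrite pairing_r // => ->; lia.
move=> k _ hk h1; have := dom_mono hx hk; lra.
Qed.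

Lemma pair0 i : (q < i <= r)%N -> pairing l i = 0.
Proof.
move=> hi; apply/eqP; apply/negP => /negP h; apply: (hq hi); split => //.
have := hqr; lia.
Qed.

Lemma l_tail n : (q <= n)%N -> xn l n = 0.
Proof.
move=> hn; case: (ltnP n r) => h; last by rewrite xnO.
apply: (@desc r q (fun n => xn l n = 0) _ _ n); last lia.
  rewrite -pairing_r //; apply: pair0; lia.
move=> k hk hk1 h1; have := pair0 (i := k.+1); rewrite pairing_lt /=; [|lia]; rewrite h1 subr0; apply; lia.
Qed.

Lemma pairing_int (x : vec) i : in_lattice x -> (1 <= i <= r)%N -> pairing x i \is a Num.int.
Proof.
move=> hx hi; case: (ltnP i r) => h.
  by rewrite pairing_lt ?rpredB ?xn_int //; lia.
by rewrite (_ : i = r) ?pairing_r ?xn_int //; lia.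
Qed.

Lemma pairing_q_ge1 : 1 <= pairing l q.
Proof.
case: hsq => hqr0 hne; apply: int_ge1; first by apply: pairing_int => //; case: hdom.
by rewrite lt0r hne; case: hdom => _ ->.
Qed.

End Main.
Section Cand.
Variables (r : nat) (l : vec r) (q : nat).
Hypothesis hr : (1 <= r)%N.
Hypothesis hdom : dominant l.
Hypothesis hsq : Supp l q.
Hypothesis hq : forall i, (q < i <= r)%N -> ~ Supp l i.
Local Notation vec := (vec r).
Local Notation alpha := (alpha r).
Local Notation P := (@P r).
Local Notation C := (C r).
Local Notation e := (e hr hsq).

Variable m : vec.
Hypothesis hmdom : dominant m.
Hypothesis hQ : in_Q_Delta (l - m).
Hypothesis hN : ~ in_N_Delta (l - m).
Local Notation d := (l - m).

Lemma d_int j : d 0 j \is a Num.int.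
Proof. by rewrite !mxE rpredB //; [case: hdom => /(_ j) | case: hmdom => /(_ j)]. Qed.

Lemma Pd_int k : P k d \is a Num.int.
Proof. by rewrite /P rpred_sum // => j _; rewrite rpredM ?rpred_nat ?d_int. Qed.

Lemma Pd_ge0 k : (k <= r)%N -> 0 <= P k d.
Proof.
move=> hk; case: hQ => c [hc ->]; rewrite PC // /C.
by case: ifP => // _; case: ifP => _ //; rewrite mulr_ge0.
Qed.

Lemma Pdr_ge1 : 1 <= P r d.
Proof.
apply: int_ge1; first exact: Pd_int.
rewrite lt0r Pd_ge0 // andbT; apply/negP => /eqP h0; apply: hN.
exists (fun i => Num.truncn (cx d i)).
rewrite {1}(L1 d); apply: eq_big_nat => i hi; congr (_ *: _).
rewrite truncnK // natrEint /cx; case: ifP => hir.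
  by rewrite Pd_int Pd_ge0 //; lia.
by rewrite h0 mul0r rpred0 lexx.
Qed.

Lemma d_tail (j : 'I_r) : (q <= j)%N -> d 0 j <= 0.
Proof.
move=> hj; rewrite !mxE -!xnE (l_tail hr hsq hq hj) sub0r oppr_le0.
exact: dom_nonneg hr _ _ hmdom.
Qed.

Lemma Pd_tail k : (q <= k <= r)%N -> P r d <= P k d.
Proof.
move=> hk; rewrite -subr_le0 /P -sumrB; apply: sumr_le0 => j _.
rewrite -mulrBl; have hj := ltn_ord j; rewrite hj.
case: (ltnP j k) => h; first by rewrite subrr mul0r.
rewrite subr0 mul1r d_tail //; lia.
Qed.

Lemma H1_de : H1 (d - e).
Proof.
move=> k hk; rewrite PB Peps /=.
case: (ltnP q.-1 k) => h.
  have hqr0 := hqr hsq.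
  have hk2 : (q <= k <= r)%N by clear -h hk hqr0; lia.
  have := Pdr_ge1; have := Pd_tail hk2; rewrite /=; lra.
by rewrite subr0 Pd_ge0.
Qed.

Lemma mono_d n a : (a + n < r)%N -> (forall k, (a < k <= a + n)%N -> ~ Supp l k) ->
  xn d a <= xn d (a + n).
Proof.
elim: n => [|n IH] h hc; first by rewrite addn0.
have := IH (ltac:(lia)) (fun k hk => hc k (ltac:(lia))).
have hp : pairing l (a + n).+1 = 0.
  apply/eqP; apply/negP => /negP hne; apply: (hc (a + n).+1); first lia.
  split => //; lia.
rewrite pairing_lt /= in hp; last lia.
have hm := dom_mono hr (n := (a + n)%N) hmdom (ltac:(lia)).
rewrite !xnB addnS; lra.
Qed.

Lemma H2_de : H2 l (d - e).
Proof.
move=> a b hab; rewrite !mxE => hb hnc.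
have haq : (nat_of_ord a == q.-1) = false.
  apply/negP => /eqP ha; apply: (hnc q); [have := hqr hsq; lia | exact: hsq].
have haq' : (a == qo hr hsq) = false by rewrite -haq.
rewrite haq' subr0.
have hmono : d 0 a <= d 0 b.
  rewrite -!xnE (_ : nat_of_ord b = (a + (b - a))%N); last lia.
  apply: mono_d; first by have := ltn_ord b; lia.
  move=> k hk; apply: hnc; lia.
rewrite !mxE in hmono.
move: hb; case: (b == qo hr hsq) => /= hb.
  have : ~~ (0 < l 0 b - m 0 b).
    apply/negP => hpos; have := int_ge1 (d_int b); rewrite !mxE => /(_ hpos); lra.
  rewrite -leNgt; lra.
lra.
Qed.

Lemma K_main : Good l (d - e).
Proof.
have [y [hy1 [hy2 hy3]]] := TL (n := #|[pred j | ((d - e) 0 j != 0)%R]|) (leqnn _) H1_de H2_de.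
have -> : d - e = (d - e - y) + y by rewrite subrK.
apply: GoodD => //; apply: (GoodPos hsq hy2) => j hj.
apply/eqP; rewrite eq_le hy2 andbT; apply: hy3.
rewrite !mxE (_ : (j == qo hr hsq) = false); last first.
  apply/negP => /eqP/(congr1 val) hj'; rewrite /qo /= in hj'; have := hqr hsq; clear -hj hj'; lia.
rewrite subr0; have := d_tail hj; rewrite !mxE //.
Qed.
End Cand.
Lemma natB3 (a b c : nat) : (a + b = c)%N -> (a%:R = c%:R - b%:R :> rat).
Proof. move=> h; have h' : (a + b)%:R = c%:R :> rat by rewrite h. rewrite natrD in h'; lra. Qed.

Lemma L0f r (c f : nat -> rat) (j : 'I_r) : f 0%N = 0 -> (forall m, (1 <= m < r)%N -> c m = f m) ->
  2 * c r = f r -> (\sum_(1 <= i < r.+1) c i *: alpha r i) 0 j = f j.+1 - f j.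
Proof.
move=> h0 h1 h2.
have hC : forall m, (m <= r)%N -> C r c m = f m.
  move=> m hm; rewrite /C; case: eqVneq => [->|hm0] //.
  case: ifP => hmr; first by apply: h1; lia.
  by rewrite (_ : m = r) //; lia.
by rewrite L0 !hC //; have := ltn_ord j; lia.
Qed.

Section Fin.
Variables (r : nat) (l : vec r) (q : nat).
Hypothesis hr : (1 <= r)%N.
Hypothesis hdom : dominant l.
Hypothesis hsq : Supp l q.
Hypothesis hq : forall i, (q < i <= r)%N -> ~ Supp l i.
Local Notation vec := (vec r).
Local Notation alpha := (alpha r).
Local Notation P := (@P r).
Local Notation C := (C r).
Local Notation e := (e hr hsq).

Lemma eqo (j : 'I_r) : (j == qo hr hsq) = (nat_of_ord j == q.-1).
Proof. by []. Qed.

Lemma xn_e n : (n < r)%N -> xn e n = (n == q.-1)%:R.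
Proof. by move=> h; rewrite (xn_lt _ h) mxE. Qed.

Lemma e_in_Q : in_Q_Delta e.
Proof.
have hq0 := hqr hsq.
exists (fun i => if (i < r)%N then (q <= i)%:R else 2^-1); split.
  by move=> i; case: ifP => _; rewrite ?ler0n ?invr_ge0 ?ler0n.
apply/rowP => j; rewrite (L0f (f := fun m => (q <= m)%:R)) //.
- by rewrite eE; apply: natB3; clear -hq0; lia.
- by rewrite (_ : (q <= 0)%N = false) //; lia.
- by move=> m hm; rewrite (_ : (m < r)%N = true) //; lia.
- by rewrite ltnn (_ : (q <= r)%N = true) ?mulfV //; lia.
Qed.

Lemma e_notN : ~ in_N_Delta e.
Proof.
case=> c hc.
have h1 : P r e = 1 by rewrite Peps /= (_ : (q.-1 < r)%N = true) //; have := hqr hsq; lia.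
have h2 : P r e = 2 * (c r)%:R.
  rewrite hc PC // /C (_ : (r == 0%N) = false) ?ltnn //; lia.
have : (1%:R : rat) = (2 * c r)%N%:R by rewrite natrM -h2 h1.
move/eqP; rewrite eqr_nat => /eqP; lia.
Qed.

Lemma llb_dom : dominant (l - e).
Proof.
have hq0 := hqr hsq.
case: hdom => hli hpl; split.
  by move=> j; rewrite !mxE rpredB ?rpred_nat.
move=> i hi; case: (ltnP i r) => hir.
  rewrite pairing_lt ?xnB ?xn_e; [|lia|lia|lia].
  have := hpl i hi; rewrite pairing_lt; last lia.
  case: (eqVneq i q) => [eiq|niq].
    have := pairing_q_ge1 hr hdom hsq; rewrite -eiq pairing_lt; last lia.
    rewrite eqxx (_ : (i == i.-1) = false); last lia.
    rewrite /=; lra.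
  rewrite (_ : (i.-1 == q.-1) = false); last lia.
  case: (i == q.-1); rewrite /=; lra.
have eir : i = r by lia.
rewrite eir pairing_r // xnB xn_e; last lia.
have := hpl r; rewrite pairing_r //; move=> /(_ (ltac:(lia))) hp.
case: (eqVneq q r) => [eqr|nqr].
  have := pairing_q_ge1 hr hdom hsq; rewrite eqr pairing_r // eqxx /=; lra.
rewrite (_ : (r.-1 == q.-1) = false) /=; [lra|lia].
Qed.

Lemma llb_sub : l - (l - e) = e.
Proof. by rewrite opprB addrC subrK. Qed.

Lemma cand_llb : LB_candidate l (l - e).
Proof.
left; split; first by split; [exact: llb_dom | rewrite llb_sub; exact: e_in_Q].
by case=> _; rewrite llb_sub; exact: e_notN.
Qed.

Lemma K_LB m : LB l m -> Good l (l - e - m).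
Proof.
move=> [hr2 [_ [hsr ->]]].
have eqr : q = r.
  have := hqr hsq; case: (ltnP q r) => h; last lia.
  by move=> _; exfalso; apply: (hq (i := r)) => //; lia.
apply: (GoodPos hsq).
  move=> j; rewrite !mxE eqo eqr (_ : (r.-1 < r)%N = true); last lia.
  rewrite ltnn eqxx (prednK hr).
  have hj := ltn_ord j.
  rewrite (_ : (j.+1 == r) = (nat_of_ord j == r.-1)); last lia.
  case: (nat_of_ord j == r.-1); case: (j.+1 == r.-1); rewrite /=; lra.
move=> j hj; rewrite eqr in hj; have := ltn_ord j; clear -hj; lia.
Qed.

Lemma K_all m : LB_candidate l m -> Good l (l - e - m).
Proof.
case=> [[[hmdom hQ] hN]|hLB]; last exact: K_LB.
have hN' : ~ in_N_Delta (l - m) by move=> h; apply: hN.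
have := K_main hr hdom hsq hq hmdom hQ hN'.
by rewrite addrAC.
Qed.

Lemma llb_eq : l - \sum_(q <= i < r) alpha i - 2^-1 *: alpha r = l - e.
Proof.
have hq0 := hqr hsq.
apply/rowP => j; have hj := ltn_ord j.
rewrite !mxE summxE.
rewrite (eq_big_nat _ _ (F2 := fun i => 1 * (j.+1 == i)%:R - 1 * ((j : nat) == i)%:R)); last first.
  move=> i hi; rewrite !mxE (_ : (i < r)%N = true); last lia.
  by rewrite !mul1r eqSS.
rewrite sumrB !IS ltnn eqxx.
rewrite (_ : (j.+1 == r) = ~~ (j.+1 < r)%N); last lia.
rewrite (_ : (q <= j < r)%N = (q <= j)%N); last lia.
rewrite eqo.
case E1: (q <= j.+1 < r)%N; case E2: (q <= j)%N; case E3: (j.+1 < r)%N; case E4: (nat_of_ord j == q.-1);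
  rewrite /=; try (exfalso; clear -E1 E2 E3 E4 hj hq0; lia); lra.
Qed.

Lemma omega_eq : l + omega r q.-1 - omega r q = l - e.
Proof.
have hq0 := hqr hsq.
apply/rowP => j; rewrite !mxE eqo.
case E1: (j.+1 <= q.-1)%N; case E2: (j.+1 <= q)%N; case E4: (nat_of_ord j == q.-1);
  rewrite /=; try (exfalso; clear -E1 E2 E4 hq0; lia); lra.
Qed.
End Fin.

Theorem proposition2p15 (r : nat) (l : vec r) (q : nat) :
  (1 <= r)%N ->
  dominant l -> l != 0 ->
  Supp l q -> (forall i, (q < i <= r)%N -> ~ Supp l i) ->
  let llb := l - \sum_(q <= i < r) alpha r i - 2^-1 *: alpha r r in
  llb = l + omega r q.-1 - omega r q /\
  (forall m : vec r, LB_G l m <-> m = llb).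
Proof.
move=> hr hdom _ hsq hq llb.
have hllb : llb = l - e hr hsq by rewrite /llb llb_eq.
split; first by rewrite hllb omega_eq.
move=> m; rewrite hllb; split.
  case=> hc hmax; apply/esym; apply: hmax; first exact: cand_llb.
  exact: K_all hc.
move=> ->; split; first exact: cand_llb.
move=> nu hnu hle.
have h1 : Good l (nu - (l - e hr hsq)) := hle.
have h2 := K_all hr hdom hsq hq hnu.
have h3 : Good l (- (nu - (l - e hr hsq))) by rewrite opprB.
by apply/eqP; rewrite -subr_eq0; apply/eqP; apply: Good_pointed h1 h3.
Qed.
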